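(* Let $\mathcal{Z}$ be a data space with unknown distribution $\mu$, let $S=(Z_1,\dots,Z_n)$ have i.i.d. entries $Z_i\sim\mu$, let the learning algorithm be a Markov kernel $P_{W|S}$ producing a hypothesis $W$ in a hypothesis class $\mathcal{W}$, with $P_W$ the marginal of $W$ and $P_{W,Z_i}$ the joint law of $(W,Z_i)$. Let $l:\mathcal{W}\times\mathcal{Z}\to\mathbb{R}^+$ be a loss function and assume that for every $i=1,\dots,n$, $l(W,Z_i)$ is $\sigma$-subgaussian when $(W,Z_i)$ is distributed according to $\frac{P_{W,Z_i}+P_W\otimes\mu}{2}$. If $I(W;Z_i)\ge 8(\log 2)^2$ for all $i=1,\dots,n$, then $$\frac2n\sum_{i=1}^n\sqrt{2\sigma^2 I_{JS}(W;Z_i)}\le\frac1n\sum_{i=1}^n\sqrt{2\sigma^2 I(W;Z_i)},$$ i.e. the Jensen–Shannon information upper bound $\frac2n\sum_i\sqrt{2\sigma^2 I_{JS}(W;Z_i)}$ on $|\overline{\text{gen}}(P_{W|S},\mu)|$ is no larger than the mutual information upper bound $\frac1n\sum_i\sqrt{2\sigma^2 I(W;Z_i)}$.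
   Context: A random variable $X$ is $\sigma$-subgaussian if $\mathbb{E}[e^{\lambda(X-\mathbb{E}X)}]\le e^{\lambda^2\sigma^2/2}$ for all $\lambda\in\mathbb{R}$. Expected generalization error: $\overline{\text{gen}}(P_{W|S},\mu)=\mathbb{E}_{P_{W,S}}\big[\int l(W,z)\,\mu(dz)-\frac1n\sum_{i=1}^n l(W,Z_i)\big]$. Mutual information: $I(W;Z_i)=KL(P_{W,Z_i}\|P_W\otimes P_{Z_i})$. Jensen–Shannon information: $I_{JS}(W;Z_i)=\frac12 KL\big(P_{W,Z_i}\|M_i\big)+\frac12 KL\big(P_W\otimes P_{Z_i}\|M_i\big)$ with $M_i=\frac{P_{W,Z_i}+P_W\otimes P_{Z_i}}{2}$; here $P_{Z_i}=\mu$, $KL$ is the Kullback–Leibler divergence, and $\log$ is the natural logarithm. *)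

(* Defs.v *)
From HB Require Import structures.
From mathcomp Require Import all_boot all_order all_algebra.
From mathcomp Require Import all_classical all_reals all_analysis.
Set Implicit Arguments. Unset Strict Implicit. Unset Printing Implicit Defensive.
Import Order.TTheory GRing.Theory Num.Theory.
Import numFieldNormedType.Exports.
Local Open Scope classical_set_scope.
Local Open Scope ring_scope.

Definition KL d (T : measurableType d) (R : realType)
    (P Q : probability T R) : \bar R :=
  if pselect (P `<< Q) then
    (\int[P]_x (ln (fine (Radon_Nikodym (charge_of_finite_measure P) Q x)))%:E)%E
  else +oo%E.

Definition esqrt (R : realType) (x : \bar R) : \bar R :=
  match x with
  | r%:E => (Num.sqrt r)%:E
  | +oo%E => +oo%E
  | -oo%E => 0%E
  end.

Definition subgaussian d (T : measurableType d) (R : realType)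
    (P : probability T R) (X : T -> R) (sigma : R) : Prop :=
  measurable_fun [set: T] X /\ P.-integrable [set: T] (EFin \o X) /\
  forall lam : R,
    (\int[P]_x (expR (lam * (X x - fine (\int[P]_y (X y)%:E))))%:E
      <= (expR (lam ^+ 2 * sigma ^+ 2 / 2))%:E)%E.

Definition iid_law d (Z : measurableType d) (R : realType) (n : nat)
    (mu : probability Z R) (PS : probability (n.-tuple Z) R) : Prop :=
  forall A : 'I_n -> set Z, (forall i, measurable (A i)) ->
    PS [set s | forall i, A i (tnth s i)] = (\prod_(i < n) mu (A i))%E.

(* Main.v *)
Require Import Defs.
From HB Require Import structures.
From mathcomp Require Import all_boot all_order all_algebra.
From mathcomp Require Import all_classical all_reals all_analysis.
From mathcomp Require Import measurable_realfun.
From mathcomp Require Import lra ring.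
Import Order.TTheory GRing.Theory Num.Theory.
Import numFieldNormedType.Exports.
Local Open Scope classical_set_scope.
Local Open Scope ring_scope.

Section kl.
Context d (T : measurableType d) (R : realType).
Local Open Scope ereal_scope.

Lemma KL_le_ln2 (P M : probability T R) :
  (forall C, measurable C -> P C <= 2%:E * M C) -> KL P M <= (ln 2)%:E.
Proof.
move=> PM.
have dom : P `<< M.
  move=> N MN A mA AN; have MA0 := MN A mA AN; apply/eqP; rewrite eq_le measure_ge0 andbT.
  by rewrite (le_trans (PM _ mA)) // MA0 mule0.
have dom' : charge_of_finite_measure P `<< M by [].
rewrite /KL; case: pselect => [pm|//].
set f := Radon_Nikodym _ _.
have fint : M.-integrable setT f by exact: Radon_Nikodym_integrable.
have mf : measurable_fun [set: T] f.
  exact: (measurable_int _ fint).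
have fE A : measurable A -> P A = \int[M]_(x in A) f x.
  by move=> mA; rewrite -Radon_Nikodym_integral.
pose A := [set x | 2%:E < f x].
have mA : measurable A.
  by have := measurable_lte measurableT (measurable_cst 2%:E) mf; rewrite setTI.
have aeM : ae_eq M A f (cst 2%:E).
  apply: integral_ae_eq => //.
  - exact: integrableS fint.
  - move=> E EA mE; apply/eqP; rewrite eq_le; apply/andP; split.
      by rewrite -fE // integral_cst // PM.
    apply: ge0_le_integral => //.
    - by move=> x _; rewrite lee_fin.
    - exact: (measurable_funS measurableT (subsetT _) mf).
    - by move=> x /EA /ltW.
have aeP : ae_eq P A f (cst 2%:E) by exact: null_dominates_ae_eq aeM.
have aeP2 : {ae P, forall x, [set: T] x -> (fun x => (ln (fine (f x)))%:E)^\+ x <= (ln 2)%:E}.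
  apply: filterS aeP => x Hx _.
  have fx2 : (fine (f x) <= 2)%R.
    have [Ax|nAx] := pselect (A x); first by rewrite (Hx Ax).
    move: nAx; rewrite /A /= => /negP; rewrite -leNgt.
    by case: (f x) => [r||] /=; rewrite ?lee_fin // => _; rewrite ler0n.
  rewrite funeposE /= ge_max !lee_fin.
  have l2 : (0 <= ln (2:R))%R by rewrite ln_ge0 // ler1n.
  rewrite l2 andbT.
  have [fx0|fx0] := leP (fine (f x)) 0%R.
    by rewrite ln0 // ln_ge0 // ler1n.
  by rewrite ler_ln // posrE // ltr0n.
have mg : measurable_fun [set: T] (fun x => (ln (fine (f x)))%:E).
  apply: measurableT_comp => //; apply: measurableT_comp; first exact: measurable_ln.
  exact: measurableT_comp mf.
rewrite /= integralE.
have H1 : \int[P]_x (fun x => (ln (fine (f x)))%:E)^\+ x <= (ln 2)%:E.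
  apply: le_trans (ae_ge0_le_integral _ _ _ _ _ aeP2) _ => //.
  - exact: measurable_funepos.
  - by move=> x _; rewrite lee_fin ln_ge0 // ler1n.
  - rewrite (integral_cst P measurableT).
    rewrite -[X in _ <= X]mule1; apply: lee_wpmul2l; first by rewrite lee_fin ln_ge0 // ler1n.
    exact: probability_le1.
apply: le_trans (leeB H1 (integral_ge0 _ _)) _.
  by move=> x _; exact: funeneg_ge0.
by rewrite sube0.
Qed.
End kl.

Lemma ln2_ge_half (R : realType) : (2^-1 <= ln (2:R))%R.
Proof.
have h : (expR (2^-1 : R) <= 2)%R.
  have := expR_ge1Dx (- (2^-1 : R)); rewrite expRN => h.
  have e0 : (0 < expR (2^-1 : R))%R by apply: expR_gt0.
  have eu : (expR (2^-1 : R) * (expR (2^-1 : R))^-1 = 1)%R.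
    by rewrite mulfV // gt_eqF.
  move: h eu e0; set u := ((expR _)^-1)%R; set e := expR _ => h eu e0.
  nra.
rewrite -[X in (X <= _)%R](expRK (2^-1 : R)) ler_ln ?posrE ?expR_gt0 //; lra.
Qed.

Lemma esqrt_le (R : realType) (x y : \bar R) : (x <= y)%E -> (esqrt x <= esqrt y)%E.
Proof.
case: x => [r||]; case: y => [s||] //= h; rewrite ?lee_fin ?leey ?sqrtr_ge0 //.
by apply: ler_wsqrtr; rewrite -lee_fin.
Qed.


Theorem proposition2 (R : realType)
  (dZ : measure_display) (Zsp : measurableType dZ)
  (dW : measure_display) (Wsp : measurableType dW)
  (n : nat) (mu : probability Zsp R)
  (PS : probability (n.-tuple Zsp) R)
  (K : R.-pker (n.-tuple Zsp) ~> Wsp)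
  (PW : probability Wsp R)
  (PWZ : 'I_n -> probability (Wsp * Zsp)%type R)
  (M : 'I_n -> probability (Wsp * Zsp)%type R)
  (l : Wsp -> Zsp -> R) (sigma : R) :
  iid_law mu PS ->
  (forall B, measurable B -> PW B = (\int[PS]_s K s B)%E) ->
  (forall i C, measurable C ->
     PWZ i C = (\int[PS]_s K s [set w | C (w, tnth s i)])%E) ->
  (forall i C, measurable C ->
     M i C = ((PWZ i C + (PW \x mu)%E C) * (2^-1)%:E)%E) ->
  (forall w z, 0 <= l w z) ->
  (forall i, subgaussian (M i) (fun p => l p.1 p.2) sigma) ->
  (forall i, ((8 * ln 2 ^+ 2)%:E <= KL (PWZ i) (PW \x mu)%E)%E) ->
  ((2 / n%:R)%:E *
     \sum_(i < n) esqrt ((2 * sigma ^+ 2)%:E *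
        ((2^-1)%:E * KL (PWZ i) (M i) + (2^-1)%:E * KL (PW \x mu)%E (M i)))
   <= (n%:R^-1)%:E *
     \sum_(i < n) esqrt ((2 * sigma ^+ 2)%:E * KL (PWZ i) (PW \x mu)%E))%E.
Proof.
move=> iid PWE PWZE ME l0 sg KLge.
set a := (2 * sigma ^+ 2)%R.
have a0 : (0 <= a)%R by rewrite /a mulr_ge0 // sqr_ge0.
have l2 := ln2_ge_half R.
have l20 : (0 <= ln (2:R))%R by lra.
have hM i C : measurable C ->
    (PWZ i C <= 2%:E * M i C /\ (PW \x mu)%E C <= 2%:E * M i C)%E.
  move=> mC; rewrite ME // muleC -muleA -EFinM mulVf ?pnatr_eq0 // mule1.
  by split; [apply: leeDl | apply: leeDr]; apply: measure_ge0.
have KL1 i : (KL (PWZ i) (M i) <= (ln 2)%:E)%E.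
  by apply: KL_le_ln2 => C mC; case: (hM i C mC).
have KL2 i : (KL (PW \x mu)%E (M i) <= (ln 2)%:E)%E.
  by apply: KL_le_ln2 => C mC; case: (hM i C mC).
have Lb i : (esqrt (a%:E * ((2^-1)%:E * KL (PWZ i) (M i) + (2^-1)%:E * KL (PW \x mu)%E (M i)))
    <= (Num.sqrt (a * ln 2))%:E)%E.
  rewrite -[X in (_ <= X)%E]/(esqrt (a * ln 2)%:E); apply: esqrt_le.
  rewrite [X in (_ <= X)%E]EFinM; apply: lee_wpmul2l; first by rewrite lee_fin.
  apply: le_trans (leeD (lee_wpmul2l _ (KL1 i)) (lee_wpmul2l _ (KL2 i))) _;
    rewrite ?lee_fin ?invr_ge0 ?ler0n //.
  lra.
have Rb i : ((2 * Num.sqrt (a * ln 2))%:E <= esqrt (a%:E * KL (PWZ i) (PW \x mu)%E))%E.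
  have := KLge i; case: (KL _ _) => [r||] //= hr.
  - rewrite lee_fin in hr; rewrite lee_fin.
    have -> : (2 * Num.sqrt (a * ln 2) = Num.sqrt (4 * (a * ln 2)))%R.
      rewrite (@sqrtrM _ 4) ?ler0n //; congr (_ * _)%R.
      by rewrite (_ : 4 = 2 ^+ 2)%R ?sqrtr_sqr ?ger0_norm //; ring.
    apply: ler_wsqrtr.
    have h4 : (4 * ln 2 <= r)%R by nra.
    nra.
  - have [->|ane] := eqVneq a 0%R.
      by rewrite mul0e /= mul0r sqrtr0 mulr0.
    by rewrite muleC gt0_mulye ?lte_fin ?lt_neqAle ?a0 ?andbT 1?eq_sym // leey.
apply: (@le_trans _ _ ((2 / n%:R)%:E * \sum_(i < n) (Num.sqrt (a * ln 2))%:E)%E).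
  apply: lee_wpmul2l; first by rewrite lee_fin divr_ge0.
  by apply: lee_sum => i _; exact: Lb.
apply: (@le_trans _ _ ((n%:R^-1)%:E * \sum_(i < n) (2 * Num.sqrt (a * ln 2))%:E)%E); last first.
  apply: lee_wpmul2l; first by rewrite lee_fin invr_ge0.
  by apply: lee_sum => i _; exact: Rb.
rewrite !sumEFin -!EFinM lee_fin le_eqVlt; apply/orP; left; apply/eqP.
rewrite -mulr_sumr; ring.
Qed.
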